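(* Let $G$ be a graph with girth at least $5$ and let $S$ be an MLD-set of $G$. If $x\in S$ and $y\in V(G)\setminus S$ are such that the pair $\{x,y\}$ is not doubly resolved by $S$, then $N(y)=\{x\}$.
   Context: All graphs are finite, simple, undirected and connected; $d(u,v)$ is the shortest-path distance, $N(y)$ the open neighborhood, and the girth is the length of a shortest cycle (infinite for trees). A set $S\subseteq V(G)$ is resolving if for all distinct $x,y\in V(G)$ there is $u\in S$ with $d(u,x)\ne d(u,y)$; dominating if every vertex not in $S$ has a neighbor in $S$. An MLD-set is a set both resolving and dominating. Two vertices $u,v$ doubly resolve a pair $\{x,y\}$ if $d(u,x)-d(u,y)\ne d(v,x)-d(v,y)$; a set $S$ doubly resolves $\{x,y\}$ if some two vertices of $S$ doubly resolve it. *)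

(* Defs.v *)
From mathcomp Require Import all_boot all_order all_algebra.
Set Implicit Arguments. Unset Strict Implicit. Unset Printing Implicit Defensive.

Section Graph.
Variables (T : finType) (e : rel T).

Definition simple_graph : Prop := symmetric e /\ irreflexive e.
Definition connected_graph : Prop := forall u v : T, connect e u v.

Definition nbhd (y : T) : {set T} := [set z | e y z].

Fixpoint ball (n : nat) (u : T) : {set T} :=
  match n with
  | 0 => [set u]
  | n'.+1 => ball n' u :|: [set z | [exists w in ball n' u, e w z]]
  end.

(* shortest-path distance: least n with v in ball n u (for a connected graph
   this is < #|T|) *)
Definition dist (u v : T) : nat := find (fun n => v \in ball n u) (iota 0 #|T|).

Definition girth_ge5 : Prop :=
  (forall a b c : T, e a b -> e b c -> e c a -> False) /\
  (forall a b c d : T, uniq [:: a; b; c; d] ->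
      e a b -> e b c -> e c d -> e d a -> False).

Definition resolving (S : {set T}) : Prop :=
  forall x y : T, x != y -> exists2 u, u \in S & dist u x != dist u y.

Definition dominating (S : {set T}) : Prop :=
  forall v : T, v \notin S -> exists2 u, u \in S & e v u.

Definition MLD_set (S : {set T}) : Prop := resolving S /\ dominating S.

Definition doubly_resolve_by (u v x y : T) : Prop :=
  ((dist u x)%:Z - (dist u y)%:Z != (dist v x)%:Z - (dist v y)%:Z)%R.

Definition doubly_resolves (S : {set T}) (x y : T) : Prop :=
  exists u v, [/\ u \in S, v \in S & doubly_resolve_by u v x y].

End Graph.

(* Main.v *)
Require Import Defs.
From mathcomp Require Import all_boot all_order all_algebra.
From mathcomp Require Import zify.

Section Aux.
Variables (T : finType) (e : rel T).

Lemma distA n (u v : T) : v \in ball e n u -> dist e u v <= n.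
Proof.
move=> Hv; rewrite /dist.
case: (ltnP n #|T|) => Hn.
  rewrite leqNgt; apply/negP => Hlt.
  have := before_find 0 Hlt.
  by rewrite nth_iota // add0n Hv.
apply: leq_trans (find_size _ _) _; by rewrite size_iota.
Qed.

Lemma distC0 (u v : T) : dist e u v = 0 -> v = u.
Proof.
rewrite /dist => H.
have Hs : 0 < size (iota 0 #|T|) by rewrite size_iota; apply/card_gt0P; exists u.
have Hh : has (fun n => v \in ball e n u) (iota 0 #|T|) by rewrite has_find H.
have := nth_find 0 Hh; rewrite H nth_iota; last by rewrite size_iota in Hs.
by rewrite add0n /= inE => /eqP.
Qed.

Lemma distB (u v : T) : dist e u v <= 1 -> v = u \/ e u v.
Proof.
move=> H.
case: (ltnP (dist e u v) #|T|) => Hs.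
  have Hh : has (fun n => v \in ball e n u) (iota 0 #|T|) by rewrite has_find size_iota.
  have := nth_find 0 Hh; rewrite nth_iota // add0n -/(dist e u v).
  move: H; case: (dist e u v) => [|[|//]] _ /=.
    by rewrite inE => /eqP; left.
  rewrite !inE => /orP [/eqP ->|/existsP [w /andP [Hw Hwv]]]; first by left.
  by move: Hw; rewrite inE => /eqP <-; right.
left; have : #|T| <= 1 by apply: leq_trans Hs H.
move=> Hc; apply/eqP; apply/negPn/negP => Hne.
have : 1 < #|T|.
  rewrite (cardD1 u) inE ltnS lt0n; apply/eqP=> H0.
  have := card0_eq H0 v; by rewrite !inE Hne.
by rewrite ltnNge Hc.
Qed.

Lemma dist_self (u : T) : dist e u u = 0.
Proof. apply/eqP; rewrite -leqn0; apply: (@distA 0); by rewrite /= inE. Qed.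

Lemma dist_edge (u v : T) : e u v -> dist e u v <= 1.
Proof. move=> H; apply: distA; rewrite /= !inE; apply/orP; right; apply/existsP; exists u; by rewrite !inE eqxx H. Qed.

Lemma dist_2 (u a v : T) : e u a -> e a v -> dist e u v <= 2.
Proof.
move=> H1 H2; apply: distA; rewrite /= !inE; apply/orP; right; apply/existsP; exists a.
by rewrite H2 andbT !inE; apply/orP; right; apply/existsP; exists u; rewrite !inE eqxx H1.
Qed.
End Aux.

Theorem mainTheorem9 (T : finType) (e : rel T) (S : {set T}) (x y : T) :
  simple_graph e -> connected_graph e -> girth_ge5 e ->
  MLD_set e S -> x \in S -> y \notin S ->
  ~ doubly_resolves e S x y ->
  nbhd e y = [set x].
Proof.
move=> [Hsym Hirr] _ [G3 G4] [_ Hdom] Hx Hy Hnd.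
have Heq : forall u v, u \in S -> v \in S ->
    ((dist e u x)%:Z - (dist e u y)%:Z = (dist e v x)%:Z - (dist e v y)%:Z)%R.
  move=> u v Hu Hv; apply/eqP; apply/negPn/negP => Hne; apply: Hnd.
  by exists u, v; split.
have Hrel : forall u, u \in S -> dist e u y = dist e u x + dist e x y.
  move=> u Hu; have := Heq u x Hu Hx; rewrite dist_self; lia.
have Hxy : x != y by apply/eqP => E; rewrite -E Hx in Hy.
have Dxy : dist e x y != 0 by apply/eqP => /(@distC0 _ _ _ _) E; rewrite E eqxx in Hxy.
have [u Hu Hyu] := Hdom y Hy.
have Hux : u = x.
  have := @dist_edge _ e u y; rewrite Hsym => /(_ Hyu).
  rewrite Hrel // => H; apply/esym; apply: (@distC0 _ e); lia.
subst u.
have D1 : dist e x y = 1 by have := @dist_edge _ e x y; rewrite Hsym => /(_ Hyu); lia.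
apply/setP => z; rewrite !inE.
case: (eqVneq z x) => [->|Hzx]; first by rewrite Hyu.
apply/negP => Hyz.
have HzS : z \notin S.
  apply/negP => Hz; have := Hrel z Hz; rewrite D1.
  have := @dist_edge _ e z y; rewrite Hsym => /(_ Hyz) H1 H2.
  have : dist e z x = 0 by lia.
  by move/(@distC0 _ e) => E; rewrite E eqxx in Hzx.
have [w Hw Hzw] := Hdom z HzS.
have Hwy := @dist_2 _ e w z y; rewrite Hsym Hzw Hsym Hyz in Hwy.
have := Hrel w Hw; rewrite D1 => Hr.
have : dist e w x <= 1 by move: (Hwy erefl erefl); lia.
case/distB => [Exw|Hwx].
  subst w. by apply: (G3 x y z); rewrite // Hsym.
apply: (G4 x y z w) => //; last by rewrite Hsym.
have n1 : x != z by rewrite eq_sym.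
have n2 : x != w by apply/eqP => E; rewrite E Hirr in Hwx.
have n3 : y != z by apply/eqP => E; rewrite E Hirr in Hyz.
have n4 : y != w by apply/eqP => E; rewrite E Hw in Hy.
have n5 : z != w by apply/eqP => E; rewrite E Hirr in Hzw.
by rewrite /= !in_cons in_nil !orbF !negb_or Hxy n1 n2 n3 n4 n5.
Qed.
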